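(* Let $x\in[n]$ be $b$-above, $c=T[x]$ and $i=\mathrm{bwt}(x)$. For every $c$-run break $j>i+b+1$ and every $j'\in\{j-1,j\}$ with $\mathrm{BWT}_r[j']=c$, $$\big|\mathrm{lcs}\big(T[\mathrm{text}(j')-\mathrm{LCP}_r[j],\mathrm{text}(j')],\,T[1,x]\big)\big|\le\big|\mathrm{lcs}\big(T[1,x],\,T[\mathrm{text}(i+b)-\mathrm{LCP}_r[i+b+1],\mathrm{text}(i+b)]\big)\big|.$$
   Context: Let $T=T[1,n]\in\Sigma^n$, $n\ge2$, over $\Sigma=\{1,\dots,\sigma\}$, with $T[1]=\$$ the smallest character, occurring only at position 1, and every character of $\Sigma$ occurring in $T$. $T[i,j]=T[i]\cdots T[j]$ (empty if $i>j$). Let $\overleftarrow T=T[n]\cdots T[1]$; $\mathrm{SA}_r$ is the suffix array of $\overleftarrow T$; $\mathrm{LCP}_r[1]=0$ and for $i\ge2$, $\mathrm{LCP}_r[i]$ is the length of the longest common prefix of the suffixes of $\overleftarrow T$ starting at $\mathrm{SA}_r[i-1]$ and $\mathrm{SA}_r[i]$; $\mathrm{BWT}_r[i]=\overleftarrow T[\mathrm{SA}_r[i]-1]$ if $\mathrm{SA}_r[i]>1$, else $\overleftarrow T[n]$. $\mathrm{text}(i)=n-\mathrm{SA}_r[i]+1$, $\mathrm{bwt}(x)=\mathrm{SA}_r^{-1}[n+1-x]$. $\mathrm{lcs}(\alpha,\beta)$ is the longest common suffix of strings $\alpha,\beta$ and $|\cdot|$ denotes length. For $i\in[2,n]$, $c\in\Sigma$,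 $i$ is a $c$-run break if $\mathrm{BWT}_r[i-1]\ne\mathrm{BWT}_r[i]$ and $c\in\{\mathrm{BWT}_r[i-1],\mathrm{BWT}_r[i]\}$. With $i=\mathrm{bwt}(x)$, $x$ is $b$-above if $b\in[0,n-i-1]$ and $\mathrm{BWT}_r[i]=\dots=\mathrm{BWT}_r[i+b]\ne\mathrm{BWT}_r[i+b+1]$. *)

(* Defs.v *)
(* Texts are sequences of naturals; all positions are 1-based
   as in the paper. *)
From mathcomp Require Import all_boot.
Set Implicit Arguments. Unset Strict Implicit. Unset Printing Implicit Defensive.

Definition Tat (T : seq nat) (i : nat) : nat := nth 0 T i.-1.

(* T[i,j] = T[i] ... T[j], empty if i > j *)
Definition substr (T : seq nat) (i j : nat) : seq nat :=
  [seq Tat T k | k <- iota i (j.+1 - i)].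

Fixpoint lcp_len (s t : seq nat) : nat :=
  match s, t with
  | a :: s', b :: t' => if a == b then (lcp_len s' t').+1 else 0
  | _, _ => 0
  end.

Definition lcs_len (s t : seq nat) : nat := lcp_len (rev s) (rev t).

Fixpoint lexle (s t : seq nat) : bool :=
  match s, t with
  | [::], _ => true
  | _ :: _, [::] => false
  | a :: s', b :: t' => (a < b) || ((a == b) && lexle s' t')
  end.

Definition Rat (T : seq nat) (p : nat) : nat := nth 0 (rev T) p.-1.
Definition Rsuf (T : seq nat) (p : nat) : seq nat := drop p.-1 (rev T).

(* suffix array of the reversed text, as a list of starting positions *)
Definition SAr_list (T : seq nat) : seq nat :=
  sort (fun p q => lexle (Rsuf T p) (Rsuf T q)) (iota 1 (size T)).

Definition SAr (T : seq nat) (i : nat) : nat := nth 0 (SAr_list T) i.-1.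
Definition SAr_inv (T : seq nat) (p : nat) : nat := (index p (SAr_list T)).+1.

Definition LCPr (T : seq nat) (i : nat) : nat :=
  if i <= 1 then 0 else lcp_len (Rsuf T (SAr T i.-1)) (Rsuf T (SAr T i)).

Definition BWTr (T : seq nat) (i : nat) : nat :=
  if 1 < SAr T i then Rat T (SAr T i).-1 else Rat T (size T).

Definition text_pos (T : seq nat) (i : nat) : nat := size T - SAr T i + 1.
Definition bwt_pos (T : seq nat) (x : nat) : nat := SAr_inv T (size T + 1 - x).

Definition run_break (T : seq nat) (c i : nat) : Prop :=
  2 <= i <= size T /\ BWTr T i.-1 <> BWTr T i /\
  (c = BWTr T i.-1 \/ c = BWTr T i).

Definition b_above (T : seq nat) (b x : nat) : Prop :=
  let i := bwt_pos T x in
  b <= size T - i - 1 /\ i + b + 1 <= size T /\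
  (forall k, i <= k <= i + b -> BWTr T k = BWTr T i) /\
  BWTr T (i + b) <> BWTr T (i + b + 1).

Definition valid_text (sigma : nat) (T : seq nat) : Prop :=
  2 <= size T /\
  (forall k, 1 <= k <= size T -> 1 <= Tat T k <= sigma) /\
  Tat T 1 = 1 /\
  (forall k, 2 <= k <= size T -> Tat T 1 < Tat T k) /\
  (forall c, 1 <= c <= sigma -> exists k, 1 <= k <= size T /\ Tat T k = c).

(* Main.v *)
Require Import Defs.
From mathcomp Require Import all_boot zify.

Lemma lexle_refl : forall s, lexle s s.
Proof. by elim=> //= a s ->; rewrite eqxx orbT. Qed.

Lemma lexle_trans : forall s t u, lexle s t -> lexle t u -> lexle s u.
Proof.
elim=> [|a s IH] [|b t] [|c u] //=.
case/orP=> [ab|/andP[/eqP-> st]]; case/orP=> [bc|/andP[/eqP<- tu]].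
- by rewrite (ltn_trans ab bc).
- by rewrite ab.
- by rewrite bc.
- by rewrite eqxx (IH _ _ st tu) orbT.
Qed.

Lemma lexle_total : forall s t, lexle s t || lexle t s.
Proof.
elim=> [|a s IH] [|b t] //=.
case: (ltngtP a b) => //= ->; by rewrite eqxx /= IH.
Qed.

Lemma lcp_sym : forall s t, lcp_len s t = lcp_len t s.
Proof. by elim=> [|a s IH] [|b t] //=; rewrite eq_sym IH. Qed.

Lemma lcp_le_l : forall a b c, lexle a b -> lexle b c -> lcp_len a c <= lcp_len a b.
Proof.
elim=> [|x a IH] [|y b] [|z c] //= H1 H2.
case: (x =P z) => // xz; subst z; move: H1 H2.
case/orP=> [xy|/andP[/eqP<- ab]]; case/orP=> [yx|/andP[/eqP yx bc]].
- by have := ltn_trans xy yx; rewrite ltnn.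
- by rewrite yx ltnn in xy.
- by rewrite ltnn in yx.
- by rewrite eqxx ltnS IH.
Qed.

Lemma lcp_le_r : forall a b c, lexle a b -> lexle b c -> lcp_len a c <= lcp_len b c.
Proof.
elim=> [|x a IH] [|y b] [|z c] //= H1 H2.
case: (x =P z) => // xz; subst z; move: H1 H2.
case/orP=> [xy|/andP[/eqP<- ab]]; case/orP=> [yx|/andP[/eqP yx bc]].
- by have := ltn_trans xy yx; rewrite ltnn.
- by rewrite yx ltnn in xy.
- by rewrite ltnn in yx.
- by rewrite eqxx ltnS IH.
Qed.

Lemma lcp_nth : forall u w k, k < lcp_len u w -> nth 0 u k = nth 0 w k.
Proof.
elim=> [|a u IH] [|b w] k //=.
case: eqP => // <-; case: k => //= k; rewrite ltnS; exact: IH.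
Qed.

Lemma lcp_size : forall u w, lcp_len u w <= size u.
Proof. elim=> [|a u IH] [|b w] //=; case: eqP => //= _; rewrite ltnS; exact: IH. Qed.

Lemma lcp_take : forall u w k, lcp_len (take k u) w <= lcp_len u w.
Proof.
elim=> [|a u IH] [|b w] [|k] //=; case: eqP => //= _; rewrite ltnS; exact: IH.
Qed.

Lemma lcp_take2 : forall a b k, minn (lcp_len a b) k <= lcp_len a (take k b).
Proof.
elim=> [|x a IH] [|y b] [|k] //=; rewrite ?minn0 //.
case: eqP => //= _; rewrite minnSS ltnS; exact: IH.
Qed.

Lemma substr_eq T a t : 1 <= a -> t <= size T ->
  substr T a t = drop a.-1 (take t T).
Proof.
move=> a1 tn; apply: (@eq_from_nth _ 0).
  rewrite /substr size_map size_iota size_drop size_take.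
  case: ltnP => ? ; lia.
move=> k; rewrite /substr size_map size_iota => hk.
rewrite (nth_map 0) ?size_iota // nth_iota // nth_drop nth_take; last by lia.
rewrite /Tat; congr nth; lia.
Qed.

Lemma lcp_prefix_lt sigma T t1 t2 : valid_text sigma T ->
  1 <= t1 <= size T -> 1 <= t2 <= size T -> t1 != t2 ->
  lcp_len (rev (take t1 T)) (rev (take t2 T)) < t1.
Proof.
move=> [_ [_ [_ [Huniq _]]]] h1 h2 ne.
rewrite ltnNge; apply/negP => Hge.
have s1 : size (rev (take t1 T)) = t1 by rewrite size_rev size_take; case: ltnP; lia.
have s2 : size (rev (take t2 T)) = t2 by rewrite size_rev size_take; case: ltnP; lia.
have Hle1 := lcp_size (rev (take t1 T)) (rev (take t2 T)).
have Hle2 := lcp_size (rev (take t2 T)) (rev (take t1 T)).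
rewrite lcp_sym in Hle2; rewrite s1 in Hle1; rewrite s2 in Hle2.
have lt12 : t1 < t2 by lia.
have := @lcp_nth (rev (take t1 T)) (rev (take t2 T)) t1.-1 ltac:(lia).
have hs1 : size (take t1 T) = t1 by rewrite size_take; case: ltnP; lia.
have hs2 : size (take t2 T) = t2 by rewrite size_take; case: ltnP; lia.
rewrite !nth_rev; try lia.
move=> E.
have e1 : size (take t1 T) - t1.-1.+1 = 0 by lia.
have e2 : size (take t2 T) - t1.-1.+1 = t2 - t1 by lia.
rewrite e1 e2 !nth_take in E; try lia.
have := Huniq (t2 - t1).+1 ltac:(lia).
by rewrite /Tat /= E ltnn.
Qed.

Theorem mainTheorem6 (sigma : nat) (T : seq nat) (x b : nat) :
  valid_text sigma T ->
  1 <= x <= size T ->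
  b_above T b x ->
  forall j j' : nat,
    run_break T (Tat T x) j ->
    bwt_pos T x + b + 1 < j ->
    (j' = j.-1 \/ j' = j) ->
    BWTr T j' = Tat T x ->
    lcs_len (substr T (text_pos T j' - LCPr T j) (text_pos T j'))
            (substr T 1 x)
    <= lcs_len (substr T 1 x)
         (substr T (text_pos T (bwt_pos T x + b) - LCPr T (bwt_pos T x + b + 1))
                   (text_pos T (bwt_pos T x + b))).
Proof.
move=> Hv Hx [_ [Hib _]] j j' [Hj _] Hij Hj' _.
set n := size T.
have HS : perm_eq (SAr_list T) (iota 1 n) by apply/permPl; exact: perm_sort.
have Hsz : size (SAr_list T) = n by rewrite (perm_size HS) size_iota.
have Hu : uniq (SAr_list T) by rewrite (perm_uniq HS) iota_uniq.
have Hsort : sorted (fun p q => lexle (Rsuf T p) (Rsuf T q)) (SAr_list T).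
  by apply: sort_sorted => p q; exact: lexle_total.
have Hmono : forall p q, 1 <= p -> p <= q -> q <= n ->
    lexle (Rsuf T (SAr T p)) (Rsuf T (SAr T q)).
  move=> p q h1 h2 h3; rewrite /SAr.
  apply: (sorted_leq_nth (leT := fun p q => lexle (Rsuf T p) (Rsuf T q))) => //.
  - by move=> u v w; exact: lexle_trans.
  - by move=> u; exact: lexle_refl.
  - by rewrite inE Hsz; lia.
  - by rewrite inE Hsz; lia.
  - lia.
have Hrng : forall k, 1 <= k <= n -> 1 <= SAr T k <= n.
  move=> k hk; have : SAr T k \in iota 1 n.
    by rewrite -(perm_mem HS) /SAr mem_nth // Hsz; lia.
  rewrite mem_iota; lia.
have Hsuf : forall k, 1 <= k <= n -> Rsuf T (SAr T k) = rev (take (text_pos T k) T).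
  move=> k hk; have := Hrng k hk => hr.
  rewrite /Rsuf drop_rev /text_pos -/n; congr (rev (take _ T)); lia.
have Htxt : forall k, 1 <= k <= n -> 1 <= text_pos T k <= n.
  move=> k hk; have := Hrng k hk; rewrite /text_pos -/n; lia.
have Hdist : forall k1 k2, 1 <= k1 <= n -> 1 <= k2 <= n -> k1 != k2 ->
    text_pos T k1 != text_pos T k2.
  move=> k1 k2 h1 h2 ne.
  have : SAr T k1 != SAr T k2 by rewrite /SAr nth_uniq // ?Hsz; lia.
  have := Hrng k1 h1; have := Hrng k2 h2; rewrite /text_pos -/n; lia.
have HLCP : forall k, 2 <= k <= n ->
    LCPr T k < text_pos T k.-1 /\ LCPr T k < text_pos T k.
  move=> k hk; rewrite /LCPr ifF; last by lia.
  rewrite (Hsuf k.-1 ltac:(lia)) (Hsuf k ltac:(lia)); split.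
  - apply: (@lcp_prefix_lt sigma T (text_pos T k.-1) (text_pos T k) Hv);
      [apply: Htxt; lia | apply: Htxt; lia | apply: Hdist; lia].
  - rewrite lcp_sym; apply: (@lcp_prefix_lt sigma T (text_pos T k) (text_pos T k.-1) Hv);
      [apply: Htxt; lia | apply: Htxt; lia | apply: Hdist; lia].
set i := bwt_pos T x in Hib Hij *.
have Hin : n + 1 - x \in SAr_list T by rewrite (perm_mem HS) mem_iota; lia.
have Hidx : index (n + 1 - x) (SAr_list T) < n by rewrite -{2}Hsz index_mem.
have Hi : i = (index (n + 1 - x) (SAr_list T)).+1 by [].
have HSi : SAr T i = n + 1 - x by rewrite /SAr Hi /= nth_index.
have Hti : text_pos T i = x by rewrite /text_pos HSi -/n; lia.
have Hi1 : 1 <= i <= n by rewrite Hi; lia.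
have Hj'n : 1 <= j' <= n by case: Hj' => ->; lia.
have Hij' : i + b + 1 <= j' by case: Hj' => ->; lia.
have [L1 L2] := HLCP j ltac:(lia).
have HLj : LCPr T j < text_pos T j'.
  by case: Hj' => ->.
set tj := text_pos T j'.
set Lj := LCPr T j.
have Htj := Htxt j' Hj'n.
have Hx1 : substr T 1 x = take x T by rewrite substr_eq // ?drop0 //; lia.
rewrite Hx1 substr_eq; try lia.
rewrite substr_eq; last by have := Htxt (i + b) ltac:(lia); lia.
  2: by have [h _] := HLCP (i + b + 1) ltac:(lia); rewrite (_ : (i + b + 1).-1 = i + b) in h; [|by rewrite addn1]; lia.
rewrite /lcs_len !rev_drop.
have -> : rev (take x T) = Rsuf T (SAr T i) by rewrite Hsuf // Hti.
have -> : rev (take tj T) = Rsuf T (SAr T j') by rewrite Hsuf.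
have -> : rev (take (text_pos T (i + b)) T) = Rsuf T (SAr T (i + b)) by rewrite Hsuf //; lia.
set m := lcp_len (Rsuf T (SAr T i)) (Rsuf T (SAr T j')).
have Hm1 : m <= lcp_len (Rsuf T (SAr T i)) (Rsuf T (SAr T (i + b))).
  apply: lcp_le_l; apply: Hmono; lia.
have Hm2 : m <= LCPr T (i + b + 1).
  rewrite /LCPr ifF; last by lia.
  have -> : (i + b + 1).-1 = i + b by lia.
  apply: (leq_trans (@lcp_le_r _ (Rsuf T (SAr T (i + b))) _ _ _)).
  - apply: Hmono; lia.
  - apply: Hmono; lia.
  - apply: lcp_le_l; apply: Hmono; lia.
apply: (leq_trans (lcp_take _ _ _)).
rewrite lcp_sym -/m.
apply: leq_trans (lcp_take2 _ _ _).
rewrite leq_min Hm1 /=.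
apply: (leq_trans Hm2).
rewrite size_take.
have := Htxt (i + b) ltac:(lia).
have [h _] := HLCP (i + b + 1) ltac:(lia).
rewrite (_ : (i + b + 1).-1 = i + b) in h; [|by rewrite addn1].
move=> /andP[h1 h2]; case: (ltnP (text_pos T (i + b)) (size T)); lia.
Qed.
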